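(* Suppose given an exact triangle of $\mathcal S$-complexes consisting of $\widetilde C_i$, $\widetilde\lambda_i$, $\widetilde K_i$ for $i\in\mathbb Z/3$. Then there are $\mathcal S$-chain homotopy equivalences $\widetilde C_0\simeq\mathrm{Cone}(\widetilde\lambda_2)[1]$, $\widetilde C_1\simeq\mathrm{Cone}(\widetilde\lambda_0)$ and $\widetilde C_2\simeq\mathrm{Cone}(\widetilde\lambda_1)$.
   Context: Let $R$ be a commutative ring; graded modules are $\mathbb Z$-graded, $V[i]_j=V_{i+j}$, differentials have degree $-1$. An $\mathcal S$-complex over $R$ is a chain complex $(\widetilde C,\widetilde d)$ of finitely generated free graded $R$-modules with a graded decomposition $\widetilde C=C\oplus C[-1]\oplus\mathsf R$ in which $\widetilde d=\begin{pmatrix} d&0&0\\ v&-d&\delta_2\\ \delta_1&0&r\end{pmatrix}$; $\chi$ denotes the degree $1$ map sending $C$ identically onto $C[-1]$ and zero on $C[-1]\oplus\mathsf R$. A degree $k$ morphism $\widetilde C\to\widetilde C'$ is a degree $k$ map $\widetilde\lambda$ with $\chi'\widetilde\lambda=\widetilde\lambda\chi$ (equivalently of the form $\begin{pmatrix}\lambda&0&0\\ \mu&\lambda&\Delta_2\\ \Delta_1&0&\rho\end{pmatrix}$) and $\widetilde d'\widetilde\lambda-\widetilde\lambda\widetilde d=0$; a morphism is a degree $0$ morphism. An $\mathcal S$-chain homotopy between morphisms $\widetilde\lambda,\widetilde\lambda'$ is a map $\widetilde K$ with $\chi'\widetilde K+\widetilde K\chi=0$ (equivalently of the form $\begin{pmatrix}K&0&0\\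 L&-K&M_2\\ M_1&0&J\end{pmatrix}$) and $\widetilde d'\widetilde K+\widetilde K\widetilde d=\widetilde\lambda-\widetilde\lambda'$; $\simeq$ denotes $\mathcal S$-chain homotopy equivalence (a pair of morphisms whose composites are $\mathcal S$-chain homotopic to identities). An exact triangle of $\mathcal S$-complexes consists of, for each $i\in\mathbb Z/3$: an $\mathcal S$-complex $(\widetilde C_i,\widetilde d_i,\chi_i)$; a morphism $\widetilde\lambda_i:\widetilde C_i\to\widetilde C_{i-1}$ of degree $0$ for $i=0,2$ and of degree $-1$ for $i=1$; and a homogeneous map $\widetilde K_i:\widetilde C_i\to\widetilde C_{i-2}$ of the form $\begin{pmatrix}K&0&0\\ L&-K&M_2\\ M_1&0&J\end{pmatrix}$ with $\widetilde d_{i-2}\widetilde K_i+\widetilde K_i\widetilde d_i+\widetilde\lambda_{i-1}\widetilde\lambda_i=0$; such that for each $i$ the map $\widetilde\lambda_{i-2}\widetilde K_i-\widetilde K_{i-1}\widetilde\lambda_i$, regarded as a morphism $(\widetilde C_i,\widetilde d_i,\chi_i)\to(\widetilde C_i,-\widetilde d_i,-\chi_i)$, is $\mathcal S$-chain homotopy equivalent (i.e. $\mathcal S$-chain homotopic) to an isomorphism. For a degree $k$ morphism $\widetilde\lambda:\widetilde C\to\widetilde C'$, $\mathrm{Cone}(\widetilde\lambda)$ is the $\mathcal S$-complex with underlying module $\widetilde C[-1-k]\oplus\widetilde C'$, differential $\begin{pmatrix}-\widetilde d&0\\ \widetilde\lambda&\widetilde d'\end{pmatrix}$ and $\chi$-map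 $\begin{pmatrix}-\chi&0\\0&\chi'\end{pmatrix}$. For an $\mathcal S$-complex $\widetilde C$, $\widetilde C[1]$ denotes the $\mathcal S$-complex with underlying graded module $\widetilde C[1]$ and the same differential and $\chi$-map. *)

(* Defs.v *)
From HB Require Import structures.
From mathcomp Require Import all_boot all_order all_algebra.
Unset Strict Implicit. Unset Printing Implicit Defensive.
Import Order.TTheory GRing.Theory Num.Theory.
Local Open Scope ring_scope.

(* A finitely generated free graded R-module is R^n with a homogeneous basis;
   [deg i] is the degree of the i-th basis vector.  Maps are matrices acting on
   column vectors: A : 'M_(m, n) is a map from the n-module to the m-module. *)

Definition homog {m n : nat} (dm : 'I_m -> int) (dn : 'I_n -> int) (k : int)
  {R : comPzRingType} (A : 'M[R]_(m, n)) : Prop :=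
  forall i j, A i j != 0 -> dm i = dn j + k.

Unset Implicit Arguments.
Record cx (R : comPzRingType) := Cx {
  cn : nat; cdeg : 'I_cn -> int; cd : 'M[R]_cn; cchi : 'M[R]_cn }.

(* Data of an S-complex: C (rank n, degrees deg), blocks d, v, delta1, delta2, r,
   the underlying module being C ⊕ C[-1] ⊕ R. *)
Record Sdata (R : comPzRingType) := Sd {
  sn : nat; sdeg : 'I_sn -> int;
  sd : 'M[R]_sn; sv : 'M[R]_sn;
  sdel1 : 'M[R]_(1, sn); sdel2 : 'M[R]_(sn, 1); sr : 'M[R]_1 }.

Arguments Cx {R}.
Arguments cn {R}. Arguments cdeg {R}. Arguments cd {R}. Arguments cchi {R}.
Arguments sn {R}. Arguments sdeg {R}. Arguments sd {R}. Arguments sv {R}.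
Arguments sdel1 {R}. Arguments sdel2 {R}. Arguments sr {R}.


(* degrees of C ⊕ C[-1] ⊕ R  (V[i]_j = V_{i+j}, so C[-1] raises degrees by 1,
   and R sits in degree 0) *)
Definition Sdegs (n : nat) (deg : 'I_n -> int) (i : 'I_(n + n + 1)) : int :=
  match split i with
  | inl j => match split j with inl a => deg a | inr a => deg a + 1 end
  | inr _ => 0
  end.

Definition toCx {R : comPzRingType} (S : Sdata R) : cx R :=
  @Cx R (sn S + sn S + 1) (@Sdegs (sn S) (sdeg S))
    (block_mx (block_mx (sd S) 0 (sv S) (- sd S)) (col_mx 0 (sdel2 S))
              (row_mx (sdel1 S) 0) (sr S))
    (block_mx (block_mx 0 0 1%:M 0) 0 0 0).

Definition Scomplex {R : comPzRingType} (S : Sdata R) : Prop :=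
  homog (cdeg (toCx S)) (cdeg (toCx S)) (-1) (cd (toCx S)) /\
  cd (toCx S) *m cd (toCx S) = 0.

Definition morph {R : comPzRingType} (C C' : cx R) (k : int)
  (L : 'M[R]_(cn C', cn C)) : Prop :=
  [/\ homog (cdeg C') (cdeg C) k L,
      cchi C' *m L = L *m cchi C &
      cd C' *m L - L *m cd C = 0].

Definition shtpy {R : comPzRingType} (C C' : cx R) (L L' K : 'M[R]_(cn C', cn C))
  : Prop :=
  [/\ homog (cdeg C') (cdeg C) 1 K,
      cchi C' *m K + K *m cchi C = 0 &
      cd C' *m K + K *m cd C = L - L'].

Definition sheq {R : comPzRingType} (C C' : cx R) : Prop :=
  exists (f : 'M[R]_(cn C', cn C)) (g : 'M[R]_(cn C, cn C')),
    [/\ morph C C' 0 f, morph C' C 0 g,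
        exists K, shtpy C C (g *m f) 1%:M K &
        exists K, shtpy C' C' (f *m g) 1%:M K].

Definition invertible_mx {R : comPzRingType} {n : nat} (g : 'M[R]_n) : Prop :=
  exists h : 'M[R]_n, g *m h = 1%:M /\ h *m g = 1%:M.

Definition negcx {R : comPzRingType} (C : cx R) : cx R :=
  @Cx R (cn C) (cdeg C) (- cd C) (- cchi C).

Definition htpc_iso {R : comPzRingType} (C : cx R) (f : 'M[R]_(cn C)) : Prop :=
  morph C (negcx C) 0 f /\
  exists (g : 'M[R]_(cn C)) (K : 'M[R]_(cn C)),
    [/\ morph C (negcx C) 0 g, invertible_mx g & shtpy C (negcx C) f g K].

Definition shift1 {R : comPzRingType} (C : cx R) : cx R :=
  @Cx R (cn C) (fun i => cdeg C i - 1) (cd C) (cchi C).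

(* Cone of a degree k morphism L : C -> C' ; module C[-1-k] ⊕ C' *)
Definition cone {R : comPzRingType} (C C' : cx R) (k : int)
  (L : 'M[R]_(cn C', cn C)) : cx R :=
  @Cx R (cn C + cn C')
    (fun i => match split i with
              | inl a => cdeg C a + 1 + k
              | inr b => cdeg C' b end)
    (block_mx (- cd C) 0 L (cd C'))
    (block_mx (- cchi C) 0 0 (cchi C')).

(* Main.v *)
Require Import Defs.
From HB Require Import structures.
From mathcomp Require Import all_boot all_order all_algebra.
From mathcomp Require Import zify.
Import Order.TTheory GRing.Theory Num.Theory.
Local Open Scope ring_scope.
Set Implicit Arguments. Unset Strict Implicit.

Section S_H1.
Variable R : comPzRingType.

Lemma homog_conv m n (dm dm' : 'I_m -> int) (dn dn' : 'I_n -> int) (k k' : int)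
  (A : 'M[R]_(m, n)) :
  (forall i j, dm i = dn j + k -> dm' i = dn' j + k') ->
  homog dm dn k A -> homog dm' dn' k' A.
Proof. by move=> H hA i j /hA /H. Qed.

Lemma homog0 m n (dm : 'I_m -> int) (dn : 'I_n -> int) k :
  homog dm dn k (0 : 'M[R]_(m, n)).
Proof. by move=> i j; rewrite mxE eqxx. Qed.

Lemma homogD m n (dm : 'I_m -> int) (dn : 'I_n -> int) k (A B : 'M[R]_(m, n)) :
  homog dm dn k A -> homog dm dn k B -> homog dm dn k (A + B).
Proof.
move=> hA hB i j; rewrite mxE => H.
case: (eqVneq (A i j) 0) => [E|]; last exact: hA.
by apply: hB; move: H; rewrite E add0r.
Qed.

Lemma homogN m n (dm : 'I_m -> int) (dn : 'I_n -> int) k (A : 'M[R]_(m, n)) :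
  homog dm dn k A -> homog dm dn k (- A).
Proof. by move=> hA i j; rewrite mxE oppr_eq0; apply: hA. Qed.

Lemma homogB m n (dm : 'I_m -> int) (dn : 'I_n -> int) k (A B : 'M[R]_(m, n)) :
  homog dm dn k A -> homog dm dn k B -> homog dm dn k (A - B).
Proof. by move=> hA hB; apply: homogD => //; apply: homogN. Qed.

Lemma homogZ m n (dm : 'I_m -> int) (dn : 'I_n -> int) k c (A : 'M[R]_(m, n)) :
  homog dm dn k A -> homog dm dn k (c *: A).
Proof.
move=> hA i j; rewrite mxE => H; apply: hA; apply: contraNneq H => ->.
by rewrite mulr0.
Qed.

Lemma homogM m n p (dm : 'I_m -> int) (dn : 'I_n -> int) (dp : 'I_p -> int) k l
  (A : 'M[R]_(m, n)) (B : 'M[R]_(n, p)) :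
  homog dm dn k A -> homog dn dp l B -> homog dm dp (l + k) (A *m B).
Proof.
move=> hA hB i j; rewrite mxE => H.
have [x /andP[Hx1 Hx2]|none] := pickP (fun x => (A i x != 0) && (B x j != 0)).
  by rewrite (hA _ _ Hx1) (hB _ _ Hx2) addrA.
case/eqP: H; apply: big1 => x _.
have := none x; case: (eqVneq (A i x) 0) => [->|_ /=]; first by rewrite mul0r.
by move/negbFE/eqP ->; rewrite mulr0.
Qed.

Lemma homog1 n (dn : 'I_n -> int) : homog dn dn 0 (1%:M : 'M[R]_n).
Proof.
move=> i j; rewrite mxE; case: (eqVneq i j) => [->|] /=; first by rewrite addr0.
by rewrite mulr0n eqxx.
Qed.

Lemma homog_col m1 m2 n (dC : 'I_(m1 + m2) -> int) (dn : 'I_n -> int) k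
  (A1 : 'M[R]_(m1, n)) (A2 : 'M[R]_(m2, n)) :
  homog (fun i => dC (lshift m2 i)) dn k A1 ->
  homog (fun i => dC (rshift m1 i)) dn k A2 -> homog dC dn k (col_mx A1 A2).
Proof.
move=> h1 h2 i j; case: (split_ordP i) => i' ->.
  by rewrite col_mxEu; apply: h1.
by rewrite col_mxEd; apply: h2.
Qed.

Lemma homog_row m n1 n2 (dm : 'I_m -> int) (dC : 'I_(n1 + n2) -> int) k
  (A1 : 'M[R]_(m, n1)) (A2 : 'M[R]_(m, n2)) :
  homog dm (fun i => dC (lshift n2 i)) k A1 ->
  homog dm (fun i => dC (rshift n1 i)) k A2 -> homog dm dC k (row_mx A1 A2).
Proof.
move=> h1 h2 i j; case: (split_ordP j) => j' ->.
  by rewrite row_mxEl; apply: h1.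
by rewrite row_mxEr; apply: h2.
Qed.

Lemma homog_block m1 m2 n1 n2 (dm : 'I_(m1 + m2) -> int) (dn : 'I_(n1 + n2) -> int) k
  (A1 : 'M[R]_(m1, n1)) A2 A3 (A4 : 'M[R]_(m2, n2)) :
  homog (fun i => dm (lshift m2 i)) (fun i => dn (lshift n2 i)) k A1 ->
  homog (fun i => dm (lshift m2 i)) (fun i => dn (rshift n1 i)) k A2 ->
  homog (fun i => dm (rshift m1 i)) (fun i => dn (lshift n2 i)) k A3 ->
  homog (fun i => dm (rshift m1 i)) (fun i => dn (rshift n1 i)) k A4 ->
  homog dm dn k (block_mx A1 A2 A3 A4).
Proof.
move=> h1 h2 h3 h4; rewrite block_mxEh; apply: homog_row; apply: homog_col => //.
Qed.

Definition sg (z : int) : R := (-1) ^+ absz z.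

Lemma sgD a b : sg (a + b) = sg a * sg b.
Proof.
rewrite /sg -exprD -signr_odd -[in RHS]signr_odd.
have t : ((absz (a + b)%R + absz a + absz b) %% 2 = 0)%N by lia.
move: t; rewrite modn2 !oddD => t.
by congr (_ ^+ _); move: t; case: (odd _); case: (odd _); case: (odd _).
Qed.

Lemma sg_sq a : sg a * sg a = 1.
Proof. by rewrite -exprD -signr_odd addnn odd_double. Qed.

Lemma sgN1 : sg (-1) = -1.
Proof. by rewrite /sg /= expr1. Qed.

Lemma sg1 : sg 1 = -1.
Proof. by rewrite /sg /= expr1. Qed.

Definition Emx {n} (d : 'I_n -> int) : 'M[R]_n := diag_mx (\row_i sg (d i)).

Lemma E_sq n (d : 'I_n -> int) : Emx d *m Emx d = 1%:M.
Proof.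
apply/matrixP => i j; rewrite mul_diag_mx !mxE.
case: (eqVneq i j) => [->|] /=; first by rewrite sg_sq.
by rewrite !mulr0n mulr0.
Qed.

Lemma E_homog n (d : 'I_n -> int) : homog d d 0 (Emx d).
Proof.
move=> i j; rewrite mxE; case: (eqVneq i j) => [->|] /=; first by rewrite addr0.
by rewrite mulr0n eqxx.
Qed.

Lemma E_comm m n (dm : 'I_m -> int) (dn : 'I_n -> int) k (A : 'M[R]_(m, n)) :
  homog dm dn k A -> Emx dm *m A = sg k *: (A *m Emx dn).
Proof.
move=> hA; apply/matrixP => i j; rewrite mul_diag_mx mul_mx_diag !mxE.
case: (eqVneq (A i j) 0) => [->|/hA ->]; first by rewrite !(mulr0, mul0r).
by rewrite sgD [A i j * _]mulrC mulrA [sg k * _]mulrC.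
Qed.
End S_H1.

Section S_H2.
Variable R : comPzRingType.

Lemma split_l m n (i : 'I_m) : split (lshift n i) = inl i.
Proof. exact: (unsplitK (inl i)). Qed.
Lemma split_r m n (i : 'I_n) : split (rshift m i) = inr i.
Proof. exact: (unsplitK (inr i)). Qed.

Definition goodcx (C : cx R) :=
  [/\ homog (cdeg C) (cdeg C) (-1) (cd C), cd C *m cd C = 0,
      homog (cdeg C) (cdeg C) 1 (cchi C) & cchi C *m cd C + cd C *m cchi C = 0].

Lemma good_toCx (S : Sdata R) : Scomplex S -> goodcx (toCx S).
Proof.
case=> h1 h2; split => //.
  rewrite /=; apply: homog_block; try exact: homog0.
  apply: homog_block; try exact: homog0.
  move=> i j; rewrite mxE; case: (eqVneq i j) => [->|] /=; last by rewrite mulr0n eqxx.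
  by move=> _; rewrite /Sdegs (@split_l _ 1 (rshift _ j)) (@split_l _ 1 (lshift _ j)) split_r split_l.
rewrite /toCx /= !mulmx_block.
rewrite !(mul0mx, mulmx0, mul1mx, mulmx1, add0r, addr0).
rewrite mul_block_col mul_row_block !(mul0mx, mulmx0, mul1mx, mulmx1, add0r, addr0).
by rewrite col_mx0 row_mx0 add_block_mx !addr0 add_block_mx addr0 addrN !block_mx0.
Qed.
End S_H2.

Section S_H3.
Variable R : comPzRingType.

Definition pim {n} (d : 'I_n -> int) (t : int) : 'M[R]_n :=
  diag_mx (\row_i ((d i == t)%:R)).

Lemma homog_pi m n (dm : 'I_m -> int) (dn : 'I_n -> int) (A : 'M[R]_(m, n)) :
  homog dm dn 0 A <-> forall t, pim dm t *m A = A *m pim dn t.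
Proof.
split.
  move=> hA t; apply/matrixP => i j; rewrite mul_diag_mx mul_mx_diag !mxE.
  case: (eqVneq (A i j) 0) => [->|/hA ->]; first by rewrite mulr0 mul0r.
  by rewrite addr0 mulrC.
move=> H i j nz; have := congr1 (fun M : 'M[R]_(m, n) => M i j) (H (dm i)).
rewrite /= mul_diag_mx mul_mx_diag !mxE eqxx mul1r addr0.
case: (eqVneq (dn j) (dm i)) => [->//|_]; rewrite mulr0 => E.
by rewrite E eqxx in nz.
Qed.

Lemma morph_inv (C C' : cx R) (P : 'M[R]_(cn C', cn C)) (P' : 'M[R]_(cn C, cn C')) :
  morph C C' 0 P -> P *m P' = 1%:M -> P' *m P = 1%:M -> morph C' C 0 P'.
Proof.
case=> hP hchi hd h1 h2.
have gen : forall (X : 'M[R]_(cn C)) (Y : 'M[R]_(cn C')), Y *m P = P *m X ->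
    X *m P' = P' *m Y.
  move=> X Y e.
  by rewrite -[X *m P']mul1mx -h2 -mulmxA (mulmxA P X) -e -(mulmxA Y) h1 mulmx1.
split.
- apply/homog_pi => t; apply: gen.
  by move/homog_pi: hP => ->.
- by apply: gen.
- by apply/eqP; rewrite subr_eq0; apply/eqP; apply: gen; apply/eqP;
     rewrite -subr_eq0; apply/eqP.
Qed.

Lemma morph_mul (A B C : cx R) k1 k2 (U : 'M[R]_(cn C, cn B)) (V : 'M[R]_(cn B, cn A)) :
  morph B C k1 U -> morph A B k2 V -> morph A C (k2 + k1) (U *m V).
Proof.
case=> hU cU dU [hV cV dV]; split.
- exact: homogM hU hV.
- by rewrite mulmxA cU -!mulmxA cV.
- move/eqP: dU; rewrite subr_eq0 => /eqP dU.
  move/eqP: dV; rewrite subr_eq0 => /eqP dV.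
  by rewrite mulmxA dU -!mulmxA dV subrr.
Qed.

Lemma morph_d (A B : cx R) k (U : 'M[R]_(cn B, cn A)) :
  morph A B k U -> cd B *m U = U *m cd A.
Proof. by case=> _ _ /eqP; rewrite subr_eq0 => /eqP. Qed.
Lemma morph_h (A B : cx R) k (U : 'M[R]_(cn B, cn A)) :
  morph A B k U -> homog (cdeg B) (cdeg A) k U.
Proof. by case. Qed.
Lemma morph_chi (A B : cx R) k (U : 'M[R]_(cn B, cn A)) :
  morph A B k U -> cchi B *m U = U *m cchi A.
Proof. by case. Qed.

Lemma zl (V : zmodType) (a b c e : V) : a - e - (c - b) + (c - a) = b - e.
Proof.
by rewrite opprB addrC !addrA (subrK a c) addrAC [c - e - c]addrAC subrr add0r addrC.
Qed.

Lemma zl2 (V : zmodType) (a b c a' b' c' : V) :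
  (a - b + c) + (a' - b' + c') = (a + a') - (b + b') + (c + c').
Proof. by rewrite addrACA opprD [a - b + _]addrACA. Qed.

Lemma linT m n (d1 : 'M[R]_m) (d2 : 'M[R]_n) (X Y Z : 'M[R]_(m, n)) :
  d1 *m (X - Y + Z) + (X - Y + Z) *m d2 =
  (d1 *m X + X *m d2) - (d1 *m Y + Y *m d2) + (d1 *m Z + Z *m d2).
Proof. by rewrite mulmxDr mulmxBr mulmxDl mulmxBl zl2. Qed.

Lemma sandl q p r (dq : 'M[R]_q) (dp : 'M[R]_p) (dr : 'M[R]_r) (U : 'M[R]_(q, p))
  (X : 'M[R]_(p, r)) :
  dq *m U = U *m dp -> dq *m (U *m X) + U *m X *m dr = U *m (dp *m X + X *m dr).
Proof. by move=> e; rewrite mulmxDr !mulmxA e. Qed.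

Lemma sandr q p r (dq : 'M[R]_q) (dp : 'M[R]_p) (dr : 'M[R]_r) (X : 'M[R]_(q, p))
  (V : 'M[R]_(p, r)) :
  dp *m V = V *m dr -> dq *m (X *m V) + X *m V *m dr = (dq *m X + X *m dp) *m V.
Proof. by move=> e; rewrite mulmxDl -!mulmxA e. Qed.

Lemma hequiv (A B : cx R) (F : 'M[R]_(cn B, cn A)) (G : 'M[R]_(cn A, cn B))
  (P P' H1 : 'M[R]_(cn A)) (Q Q' H2 : 'M[R]_(cn B)) :
  morph A B 0 F -> morph B A 0 G ->
  morph A A 0 P -> P *m P' = 1%:M -> P' *m P = 1%:M -> shtpy A A (G *m F) P H1 ->
  morph B B 0 Q -> Q *m Q' = 1%:M -> Q' *m Q = 1%:M -> shtpy B B (F *m G) Q H2 ->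
  sheq A B.
Proof.
move=> mF mG mP PP' P'P [hH1 cH1 dH1] mQ QQ' Q'Q [hH2 cH2 dH2].
have mP' := morph_inv mP PP' P'P.
have mQ' := morph_inv mQ QQ' Q'Q.
set L := P' *m G. set Rr := G *m Q'.
have mL : morph B A 0 L by have := morph_mul mP' mG; rewrite addr0.
have mR : morph B A 0 Rr by have := morph_mul mG mQ'; rewrite addr0.
set I := P' *m H1. set J := H2 *m Q'.
have eI : cd A *m I + I *m cd A = L *m F - 1%:M.
  by rewrite /I /L mulmxA (morph_d mP') -!mulmxA -mulmxDr dH1 mulmxBr P'P.
have eJ : cd B *m J + J *m cd B = F *m Rr - 1%:M.
  by rewrite /J /Rr mulmxA -(mulmxA H2 Q') -(morph_d mQ') mulmxA -mulmxDl dH2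
    mulmxBl QQ' mulmxA.
have hI : homog (cdeg A) (cdeg A) 1 I.
  by apply: (homog_conv _ (homogM (morph_h mP') hH1)) => i j ->; lia.
have hJ : homog (cdeg B) (cdeg B) 1 J.
  by apply: (homog_conv _ (homogM hH2 (morph_h mQ'))) => i j ->; lia.
have cI : cchi A *m I + I *m cchi A = 0.
  by rewrite /I mulmxA (morph_chi mP') -mulmxA -mulmxA -mulmxDr cH1 mulmx0.
have cJ : cchi B *m J + J *m cchi B = 0.
  by rewrite /J mulmxA -(mulmxA H2) -(morph_chi mQ') mulmxA -mulmxDl cH2 mul0mx.
exists F, L; split => //.
  by exists I; split.
exists (J - F *m L *m J + F *m I *m Rr); split.
- apply: homogD; first apply: homogB.
  + by [].
  + by apply: (homog_conv _ (homogM (homogM (morph_h mF) (morph_h mL)) hJ)) => i j ->; lia.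
  + by apply: (homog_conv _ (homogM (homogM (morph_h mF) hI) (morph_h mR))) => i j ->; lia.
- rewrite linT (sandl (dp := cchi B)); last by rewrite mulmxA (morph_chi mF) -mulmxA (morph_chi mL) mulmxA.
  rewrite cJ !mulmx0 subr0 add0r -mulmxA (sandl (dp := cchi A)) ?(morph_chi mF) //.
  rewrite (@sandr _ _ _ _ (cchi A)) ?(morph_chi mR) //.
  by rewrite cI mul0mx mulmx0.
- rewrite linT (sandl (dp := cd B)); last by rewrite mulmxA (morph_d mF) -mulmxA (morph_d mL) mulmxA.
  rewrite eJ -(mulmxA F I) (sandl (dp := cd A)) ?(morph_d mF) //.
  rewrite (@sandr _ _ _ _ (cd A)) ?(morph_d mR) // eI.
rewrite mulmxBr (mulmx1 (F *m L)) mulmxBl (mul1mx Rr) mulmxBr !mulmxA.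
  exact: zl.
Qed.
End S_H3.

Section S_H4.
Variable R : comPzRingType.

Definition gcone (Y Z : cx R) (dC : 'I_(cn Y + cn Z) -> int)
  (mu : 'M[R]_(cn Z, cn Y)) : cx R :=
  @Cx R (cn Y + cn Z) dC (block_mx (- cd Y) 0 mu (cd Z))
    (block_mx (- cchi Y) 0 0 (cchi Z)).

Lemma Qmorph (B : cx R) (M N : 'M[R]_(cn B)) :
  homog (cdeg B) (cdeg B) (-1) (cd B) -> cd B *m cd B = 0 ->
  cchi B *m cd B + cd B *m cchi B = 0 ->
  morph B B 0 M -> homog (cdeg B) (cdeg B) 1 N -> cchi B *m N + N *m cchi B = 0 ->
  morph B B 0 (M - (cd B *m N + N *m cd B)).
Proof.
move=> hd dd cd0 [hM cM dM] hN cN.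
have e1 : cchi B *m cd B = - (cd B *m cchi B) by apply/eqP; rewrite -addr_eq0 cd0.
have e2 : N *m cchi B = - (cchi B *m N) by apply/eqP; rewrite -addr_eq0 addrC cN.
split.
- apply: homogB => //; apply: homogD.
    by apply: (homog_conv _ (homogM hd hN)) => i j ->; lia.
  by apply: (homog_conv _ (homogM hN hd)) => i j ->; lia.
- rewrite mulmxBr mulmxBl cM; congr (_ - _).
  rewrite mulmxDr mulmxDl !mulmxA e1 -!mulmxA e2 mulmxN mulNmx.
  have e1r : cd B *m cchi B = - (cchi B *m cd B) by rewrite e1 opprK.
  rewrite !mulmxA -[N *m cd B *m cchi B]mulmxA e1r mulmxN mulmxA e2 mulNmx opprK. by rewrite mulNmx opprK.
- move/eqP: dM; rewrite subr_eq0 => /eqP dM.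
  rewrite mulmxBr mulmxBl dM mulmxDr mulmxDl !mulmxA dd mul0mx add0r.
  by rewrite -!mulmxA dd mulmx0 addr0 opprB addrA subrK subrr.
Qed.

End S_H4.

Section S_H5.
Variable R : comPzRingType.

Lemma cone_good (Y Z : cx R) (dC : 'I_(cn Y + cn Z) -> int) (mu : 'M[R]_(cn Z, cn Y))
  k tY tZ :
  goodcx Y -> goodcx Z -> morph Y Z k mu ->
  (forall i, dC (lshift (cn Z) i) = cdeg Y i + tY) ->
  (forall j, dC (rshift (cn Y) j) = cdeg Z j + tZ) -> k + tZ = tY - 1 ->
  goodcx (gcone dC mu).
Proof.
case=> hdY ddY hcY cdY [hdZ ddZ hcZ cdZ] mmu hdl hdr hk.
have dmu := morph_d mmu; have cmu := morph_chi mmu.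
split; rewrite /gcone /=.
- apply: homog_block.
  + apply: homogN; apply: (homog_conv _ hdY) => i j; rewrite !hdl => ->; lia.
  + exact: homog0.
  + apply: (homog_conv _ (morph_h mmu)) => i j; rewrite hdr hdl => ->; lia.
  + apply: (homog_conv _ hdZ) => i j; rewrite !hdr => ->; lia.
- rewrite mulmx_block !(mulmx0, mul0mx, addr0, add0r) mulmxN mulNmx opprK ddY ddZ.
  by rewrite dmu mulmxN addNr block_mx0.
- apply: homog_block; try exact: homog0.
  + apply: homogN; apply: (homog_conv _ hcY) => i j; rewrite !hdl => ->; lia.
  + apply: (homog_conv _ hcZ) => i j; rewrite !hdr => ->; lia.
- rewrite !mulmx_block !(mulmx0, mul0mx, addr0, add0r) !mulmxN !mulNmx !opprK.
  by rewrite add_block_mx cdY cdZ cmu addrN addr0 block_mx0.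
Qed.

End S_H5.

Section S_H7.
Variable R : comPzRingType.

Lemma z11 (V : zmodType) (w g v z : V) : -w + g = (v - (w - z - g)) + (-v + -z).
Proof.
by rewrite !opprB addrC (addrC v) -addrA (addrA v) addrN add0r addrAC -addrA addKr.
Qed.

Lemma B11 x y (eX dX : 'M[R]_x) (eY dY gy Hy : 'M[R]_y) (a : 'M[R]_(y, x))
  (KY : 'M[R]_(x, y)) z (KZ : 'M[R]_(y, z)) (mu : 'M[R]_(z, y)) :
  a *m eX = eY *m a -> eY *m dY = - (dY *m eY) ->
  - dY *m Hy + Hy *m dY = a *m KY - KZ *m mu - gy ->
  a *m eX *m - KY - - (eY *m gy) =
  - dY *m (eY *m Hy) + ((eY *m Hy) *m - dY + - (eY *m KZ) *m mu).
Proof.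
move=> ea ed h.
have -> : - dY *m (eY *m Hy) = eY *m (dY *m Hy).
  by rewrite mulNmx (mulmxA eY) ed mulNmx mulmxA.
rewrite ea mulmxN mulNmx !opprK.
rewrite mulmxN -!mulmxA -!mulmxN -!mulmxDr.
congr (_ *m _).
move: h; rewrite mulNmx => h.
have -> : dY *m Hy = Hy *m dY - (a *m KY - KZ *m mu - gy).
  by rewrite -h opprD opprK addrCA subrr addr0.
rewrite !mulmxN; exact: z11.
Qed.


Lemma B12 x y z (eX : 'M[R]_x) (eY dY : 'M[R]_y) (dZ : 'M[R]_z) (a : 'M[R]_(y, x))
  (b : 'M[R]_(x, z)) (KZ : 'M[R]_(y, z)) :
  a *m eX = eY *m a -> eY *m dY = - (dY *m eY) ->
  dY *m KZ + KZ *m dZ + a *m b = 0 ->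
  a *m eX *m b - 0 = - dY *m (- (eY *m KZ)) + (- (eY *m KZ)) *m dZ.
Proof.
move=> ea ed h; have ed' : dY *m eY = - (eY *m dY) by rewrite ed opprK.
rewrite subr0 ea mulNmx mulmxN opprK mulNmx mulmxA ed' mulNmx -!mulmxA -opprD.
rewrite -mulmxDr -mulmxN; congr (_ *m _).
by apply/eqP; rewrite -addr_eq0 addrC h.
Qed.

Lemma z22 (V : zmodType) (u w g v : V) : w + g = u + (v - (u - w - g)) + -v.
Proof.
by rewrite !opprB addrC (addrCA u) (addrC v) addrK addrCA subrKC.
Qed.

Lemma B22 x y z (eX : 'M[R]_x) (eY : 'M[R]_y) (eZ dZ gz Hz : 'M[R]_z)
  (b : 'M[R]_(x, z)) (KZ : 'M[R]_(y, z)) (KX : 'M[R]_(z, x)) (mu : 'M[R]_(z, y)) :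
  KX *m eX = eZ *m KX -> mu *m eY = - (eZ *m mu) -> eZ *m dZ = - (dZ *m eZ) ->
  - dZ *m Hz + Hz *m dZ = mu *m KZ - KX *m b - gz ->
  KX *m eX *m b - - (eZ *m gz) =
  mu *m - (eY *m KZ) + dZ *m - (eZ *m Hz) + - (eZ *m Hz) *m dZ.
Proof.
move=> eK emu ed h; have ed' : dZ *m eZ = - (eZ *m dZ) by rewrite ed opprK.
rewrite eK opprK !mulmxN !mulNmx !mulmxA emu ed' !mulNmx !opprK.
rewrite -!mulmxA -mulmxN -!mulmxDr; congr (_ *m _).
move: h; rewrite mulNmx => h.
have -> : dZ *m Hz = Hz *m dZ - (mu *m KZ - KX *m b - gz).
  by rewrite -h opprD opprK addrCA subrr addr0.
exact: z22.
Qed.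


Lemma C11 n (c e H : 'M[R]_n) :
  e *m c = - (c *m e) -> - c *m H + H *m c = 0 -> c *m (e *m H) + (e *m H) *m c = 0.
Proof.
move=> ec h.
have hc : c *m H = H *m c.
  by apply/eqP; rewrite -subr_eq0 -[_ - _]opprK opprB addrC -mulNmx h oppr0.
have ec' : c *m e = - (e *m c) by rewrite ec opprK.
by rewrite mulmxA ec' mulNmx -!mulmxA hc addNr.
Qed.

Lemma C11' n (c e H : 'M[R]_n) :
  e *m c = - (c *m e) -> - c *m H + H *m c = 0 -> - c *m (e *m H) + (e *m H) *m - c = 0.
Proof. by move=> ec h; rewrite mulNmx mulmxN -opprD C11 // oppr0. Qed.

Lemma C22 n (c e H : 'M[R]_n) :
  e *m c = - (c *m e) -> - c *m H + H *m c = 0 -> c *m - (e *m H) + - (e *m H) *m c = 0.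
Proof. by move=> ec h; rewrite mulNmx mulmxN -opprD C11 // oppr0. Qed.

Lemma C12 y z (eY cY : 'M[R]_y) (cZ : 'M[R]_z) (KZ : 'M[R]_(y, z)) :
  eY *m cY = - (cY *m eY) -> cY *m KZ + KZ *m cZ = 0 ->
  - cY *m - (eY *m KZ) + - (eY *m KZ) *m cZ = 0.
Proof.
move=> ec h; have ec' : cY *m eY = - (eY *m cY) by rewrite ec opprK.
rewrite mulNmx mulmxN opprK mulmxA ec' mulNmx mulNmx -!mulmxA -opprD -mulmxDr h.
by rewrite mulmx0 oppr0.
Qed.

End S_H7.

Section S_H6.
Variable R : comPzRingType.

Definition eprop (C : cx R) (e : 'M[R]_(cn C)) :=
  [/\ homog (cdeg C) (cdeg C) 0 e, e *m e = 1%:M, e *m cd C = - (cd C *m e) &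
      e *m cchi C = - (cchi C *m e)].

Lemma anti_e m n (U U' : 'M[R]_(m, n)) (D e : 'M[R]_n) :
  e *m D = - (D *m e) -> U' = - (U *m D) -> U' *m e = U *m e *m D.
Proof. by move=> h ->; rewrite -mulmxA h mulmxN mulNmx mulmxA. Qed.

Lemma tri_inv m n (A Ai : 'M[R]_m) (B Bi : 'M[R]_n) (C : 'M[R]_(n, m)) :
  A *m Ai = 1%:M -> Ai *m A = 1%:M -> B *m Bi = 1%:M -> Bi *m B = 1%:M ->
  block_mx A 0 C B *m block_mx Ai 0 (- (Bi *m C *m Ai)) Bi = 1%:M /\
  block_mx Ai 0 (- (Bi *m C *m Ai)) Bi *m block_mx A 0 C B = 1%:M.
Proof.
move=> h1 h2 h3 h4; rewrite !mulmx_block !(mulmx0, mul0mx, addr0, add0r) h1 h2 h3 h4.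
rewrite (scalar_mx_block m n) mulmxN !mulmxA h3 mul1mx addrN.
by rewrite mulNmx -(mulmxA _ Ai) h2 mulmx1 addNr.
Qed.

Lemma antiM m n p (Dm : 'M[R]_m) (Dn : 'M[R]_n) (Dp : 'M[R]_p)
  (U : 'M[R]_(m, n)) (V : 'M[R]_(n, p)) :
  Dm *m U = - (U *m Dn) -> Dn *m V = - (V *m Dp) -> Dm *m (U *m V) = U *m V *m Dp.
Proof. by move=> h1 h2; rewrite mulmxA h1 mulNmx -(mulmxA U Dn V) h2 mulmxN opprK mulmxA. Qed.

Lemma negeq m n (x y : 'M[R]_(m, n)) : x = - y -> y = - x.
Proof. by move=> ->; rewrite opprK. Qed.

Lemma core (X Y Z : cx R) (p k q : int)
  (a : 'M[R]_(cn Y, cn X)) (mu : 'M[R]_(cn Z, cn Y)) (b : 'M[R]_(cn X, cn Z))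
  (KX : 'M[R]_(cn Z, cn X)) (KY : 'M[R]_(cn X, cn Y)) (KZ : 'M[R]_(cn Y, cn Z))
  (eX : 'M[R]_(cn X)) (eY : 'M[R]_(cn Y)) (eZ : 'M[R]_(cn Z))
  (dC : 'I_(cn Y + cn Z) -> int) (tY tZ : int) :
  goodcx X -> goodcx Y -> goodcx Z ->
  morph X Y p a -> morph Y Z k mu -> morph Z X q b ->
  homog (cdeg Z) (cdeg X) (p + k + 1) KX ->
  homog (cdeg X) (cdeg Y) (k + q + 1) KY ->
  homog (cdeg Y) (cdeg Z) (q + p + 1) KZ ->
  cchi Z *m KX + KX *m cchi X = 0 ->
  cchi X *m KY + KY *m cchi Y = 0 ->
  cchi Y *m KZ + KZ *m cchi Z = 0 ->
  cd Z *m KX + KX *m cd X + mu *m a = 0 ->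
  cd X *m KY + KY *m cd Y + b *m mu = 0 ->
  cd Y *m KZ + KZ *m cd Z + a *m b = 0 ->
  htpc_iso X (b *m KX - KY *m a) ->
  htpc_iso Y (a *m KY - KZ *m mu) ->
  htpc_iso Z (mu *m KZ - KX *m b) ->
  eprop eX -> eprop eY -> eprop eZ ->
  a *m eX = eY *m a -> KX *m eX = eZ *m KX -> mu *m eY = - (eZ *m mu) ->
  (forall i, dC (lshift (cn Z) i) = cdeg Y i + tY) ->
  (forall j, dC (rshift (cn Y) j) = cdeg Z j + tZ) ->
  p + tY = 0 -> p + k + 1 + tZ = 0 -> p + k + q = -1 ->
  sheq X (gcone dC mu).
Proof.
move=> gX gY gZ ma mmu mb hKX hKY hKZ cKX cKY cKZ dKX dKY dKZ isoX isoY isoZ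
  [heX eX2 edX ecX] [heY eY2 edY ecY] [heZ eZ2 edZ ecZ] ea eKX emu hdl hdr ht1 ht2 hpkq.
have gC : goodcx (gcone dC mu).
  by apply: cone_good gY gZ mmu hdl hdr _; lia.
case: (gX) => hdX ddX hcX cdX.
case: (gY) => hdY ddY hcY cdY.
case: (gZ) => hdZ ddZ hcZ cdZ.
set F := col_mx a KX *m eX.
set G := row_mx (- KY) b.
have mF : morph X (gcone dC mu) 0 F.
  split.
  - have hc : homog dC (cdeg X) 0 (col_mx a KX).
      apply: homog_col.
        by apply: (homog_conv _ (morph_h ma)) => i j; rewrite hdl => ->; lia.
      by apply: (homog_conv _ hKX) => i j; rewrite hdr => ->; lia.
    by apply: (homog_conv _ (homogM hc heX)) => i j /= ->; lia.
  - rewrite /F /= mulmxA; apply: anti_e => //.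
    rewrite mul_block_col !(mul0mx, addr0, add0r) mulNmx (morph_chi ma).
    have -> : cchi Z *m KX = - (KX *m cchi X) by apply/eqP; rewrite -addr_eq0 cKX.
    by rewrite mul_col_mx opp_col_mx.
  - apply/eqP; rewrite subr_eq0; apply/eqP.
    rewrite /F /= mulmxA; apply: anti_e => //.
    rewrite mul_block_col !(mul0mx, addr0, add0r) mulNmx (morph_d ma).
    have -> : mu *m a + cd Z *m KX = - (KX *m cd X).
      by apply/eqP; rewrite -addr_eq0 [mu *m a + _]addrC -addrA [mu *m a + _]addrC addrA dKX.
    by rewrite mul_col_mx opp_col_mx.
have mG : morph (gcone dC mu) X 0 G.
  rewrite /G /gcone; split => /=.
  - apply: homog_row.
      apply: homogN; apply: (homog_conv _ hKY) => i j; rewrite hdl => ->; lia.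
    by apply: (homog_conv _ (morph_h mb)) => i j; rewrite hdr => ->; lia.
  - rewrite mul_mx_row mul_row_block !(mulmx0, mul0mx, addr0, add0r) mulNmx.
    rewrite !mulmxN opprK (morph_chi mb).
    have -> : - (cchi X *m KY) = KY *m cchi Y.
      by apply/eqP; rewrite eq_sym -addr_eq0 addrC cKY.
    by [].
  - rewrite mul_mx_row mul_row_block !(mulmx0, mul0mx, addr0, add0r) mulNmx.
    rewrite !mulmxN opprK (morph_d mb).
    have -> : - (cd X *m KY) = KY *m cd Y + b *m mu.
      by apply/eqP; rewrite eq_sym -addr_eq0 addrC addrA dKY.
    by rewrite subrr.
case: isoX => _ [gx [Hx [mgx [gx' [gxa gxb]] [hHx cHx dHx]]]].
case: isoY => _ [gy [Hy [mgy [gy' [gya gyb]] [hHy cHy dHy]]]].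
case: isoZ => _ [gz [Hz [mgz [gz' [gza gzb]] [hHz cHz dHz]]]].
move: cHx cHy cHz dHx dHy dHz => /= cHx cHy cHz dHx dHy dHz.
have anti_d : forall (C : cx R) (g : 'M[R]_(cn C)), morph C (negcx C) 0 g ->
    cd C *m g = - (g *m cd C).
  move=> C g [_ _ /= /eqP]; rewrite subr_eq0 mulNmx => /eqP h.
  by rewrite -h opprK.
have anti_c : forall (C : cx R) (g : 'M[R]_(cn C)), morph C (negcx C) 0 g ->
    cchi C *m g = - (g *m cchi C).
  by move=> C g [_ /= h _]; rewrite -h mulNmx opprK.
set P := gx *m eX. set P' := eX *m gx'.
have mP : morph X X 0 P.
  split.
  - by apply: (homog_conv _ (homogM (morph_h mgx) heX)) => i j /= ->; lia.
  - by apply: antiM (anti_c _ _ mgx) (negeq ecX).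
  - by apply/eqP; rewrite subr_eq0; apply/eqP; apply: antiM (anti_d _ _ mgx) (negeq edX).
have PP' : P *m P' = 1%:M by rewrite /P /P' mulmxA -(mulmxA gx) eX2 mulmx1 gxa.
have P'P : P' *m P = 1%:M by rewrite /P /P' mulmxA -(mulmxA eX) gxb mulmx1 eX2.
have sh1 : shtpy X X (G *m F) P (- (Hx *m eX)).
  split.
  - by apply: homogN; apply: (homog_conv _ (homogM hHx heX)) => i j /= ->; lia.
  - have e : cchi X *m Hx = Hx *m cchi X.
      by apply/eqP; rewrite -subr_eq0 -[_ - _]opprK opprB addrC -mulNmx cHx oppr0.
    by rewrite mulmxN mulNmx mulmxA e -!mulmxA ecX mulmxN opprK addNr.
  - rewrite mulmxN mulNmx -(mulmxA Hx eX) edX mulmxN opprK (mulmxA Hx) (mulmxA (cd X)).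
    rewrite -mulNmx -mulNmx -mulmxDl dHx.
    by rewrite mulmxBl /G /F mulmxA mul_row_col mulNmx [- (KY *m a) + _]addrC.
set n1 := eY *m Hy. set n2 := - (eY *m KZ). set n4 := - (eZ *m Hz).
pose N : 'M[R]_(cn Y + cn Z) := block_mx n1 n2 0 n4.
set A' := - (eY *m gy). set B' := - (eZ *m gz).
set Ai := - (gy' *m eY). set Bi := - (gz' *m eZ).
set C' := KX *m eX *m (- KY) - (mu *m n1 + n4 *m mu).
pose Q : 'M[R]_(cn Y + cn Z) := block_mx A' 0 C' B'.
pose Q' : 'M[R]_(cn Y + cn Z) := block_mx Ai 0 (- (Bi *m C' *m Ai)) Bi.
have [QQ' Q'Q] : Q *m Q' = 1%:M /\ Q' *m Q = 1%:M.
  apply: tri_inv.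
  - by rewrite /A' /Ai mulmxN mulNmx opprK mulmxA -(mulmxA eY) gya mulmx1 eY2.
  - by rewrite /A' /Ai mulmxN mulNmx opprK mulmxA -(mulmxA gy') eY2 mulmx1 gyb.
  - by rewrite /B' /Bi mulmxN mulNmx opprK mulmxA -(mulmxA eZ) gza mulmx1 eZ2.
  - by rewrite /B' /Bi mulmxN mulNmx opprK mulmxA -(mulmxA gz') eZ2 mulmx1 gzb.
have hN : homog (cdeg (gcone dC mu)) (cdeg (gcone dC mu)) 1 N.
  rewrite /N /gcone /=; apply: homog_block.
  - by apply: (homog_conv _ (homogM heY hHy)) => i j; rewrite !hdl => ->; lia.
  - apply: homogN.
    by apply: (homog_conv _ (homogM heY hKZ)) => i j; rewrite hdl hdr => ->; lia.
  - exact: homog0.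
  - apply: homogN.
    by apply: (homog_conv _ (homogM heZ hHz)) => i j; rewrite !hdr => ->; lia.
have cN : cchi (gcone dC mu) *m N + N *m cchi (gcone dC mu) = 0.
  rewrite /N /gcone /= !mulmx_block !(mulmx0, mul0mx, addr0, add0r) add_block_mx.
  by rewrite C11' // C12 // C22 // addr0 block_mx0.
have eQ : F *m G - Q = cd (gcone dC mu) *m N + N *m cd (gcone dC mu).
  rewrite /F /G /Q /N /gcone /= mul_col_mx mul_col_row !mulmx_block.
  rewrite !(mulmx0, mul0mx, addr0, add0r) opp_block_mx !add_block_mx.
  congr (block_mx _ _ _ _).
  - exact: B11 ea edY dHy.
  - exact: B12 ea edY dKZ.
  - by rewrite /C' subKr.
  - exact: B22 eKX emu edZ dHz.
have mQ : morph (gcone dC mu) (gcone dC mu) 0 Q.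
  case: gC => hdC ddC hcC cdC.
  have := Qmorph hdC ddC cdC (morph_mul mF mG) hN cN.
  by rewrite -eQ subKr.
apply: (@hequiv _ X (gcone dC mu) F G P P' _ Q Q' N mF mG mP PP' P'P sh1 mQ QQ' Q'Q).
by split => //; rewrite eQ.
Qed.

End S_H6.

Section S_H8.
Variable R : comPzRingType.

Lemma eprop_E (C : cx R) (s : R) : goodcx C -> s * s = 1 ->
  eprop (s *: Emx R (cdeg C)).
Proof.
case=> hd _ hc _ ss; split.
- exact/homogZ/E_homog.
- by rewrite -scalemxAl -scalemxAr scalerA ss scale1r E_sq.
- by rewrite -scalemxAl (E_comm hd) sgN1 scaleN1r scalerN scalemxAr.
- by rewrite -scalemxAl (E_comm hc) sg1 scaleN1r scalerN scalemxAr.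
Qed.

Lemma core2 (X Y Z : cx R) (p k q : int)
  (a : 'M[R]_(cn Y, cn X)) (mu : 'M[R]_(cn Z, cn Y)) (b : 'M[R]_(cn X, cn Z))
  (KX : 'M[R]_(cn Z, cn X)) (KY : 'M[R]_(cn X, cn Y)) (KZ : 'M[R]_(cn Y, cn Z))
  (dC : 'I_(cn Y + cn Z) -> int) (tY tZ : int) :
  goodcx X -> goodcx Y -> goodcx Z ->
  morph X Y p a -> morph Y Z k mu -> morph Z X q b ->
  homog (cdeg Z) (cdeg X) (p + k + 1) KX ->
  homog (cdeg X) (cdeg Y) (k + q + 1) KY ->
  homog (cdeg Y) (cdeg Z) (q + p + 1) KZ ->
  cchi Z *m KX + KX *m cchi X = 0 ->
  cchi X *m KY + KY *m cchi Y = 0 ->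
  cchi Y *m KZ + KZ *m cchi Z = 0 ->
  cd Z *m KX + KX *m cd X + mu *m a = 0 ->
  cd X *m KY + KY *m cd Y + b *m mu = 0 ->
  cd Y *m KZ + KZ *m cd Z + a *m b = 0 ->
  htpc_iso X (b *m KX - KY *m a) ->
  htpc_iso Y (a *m KY - KZ *m mu) ->
  htpc_iso Z (mu *m KZ - KX *m b) ->
  (forall i, dC (lshift (cn Z) i) = cdeg Y i + tY) ->
  (forall j, dC (rshift (cn Y) j) = cdeg Z j + tZ) ->
  p + tY = 0 -> p + k + 1 + tZ = 0 -> p + k + q = -1 ->
  sheq X (gcone dC mu).
Proof.
move=> gX gY gZ ma mmu mb hKX hKY hKZ cKX cKY cKZ dKX dKY dKZ iX iY iZ hdl hdr h1 h2 h3.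
have eX := eprop_E gX (sg_sq R 0).
rewrite /sg /= expr0 scale1r in eX.
apply: (core gX gY gZ ma mmu mb hKX hKY hKZ cKX cKY cKZ dKX dKY dKZ iX iY iZ
  eX (eprop_E gY (sg_sq R p)) (eprop_E gZ (sg_sq R (p + k + 1))) _ _ _ hdl hdr h1 h2 h3).
- rewrite -scalemxAl (E_comm (morph_h ma)) scalerA sg_sq scale1r.
  by [].
- rewrite -scalemxAl (E_comm hKX) scalerA sg_sq scale1r.
  by [].
- rewrite -scalemxAl (E_comm (morph_h mmu)) scalerA -scalemxAr -scaleNr.
  by rewrite !sgD sg1 mulrN1 mulNr opprK -mulrA sg_sq mulr1.
Qed.

End S_H8.

Unset Implicit Arguments.

Theorem proposition2p24 (R : comPzRingType) (S0 S1 S2 : Sdata R)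
  (l0 : 'M[R]_(cn (toCx S2), cn (toCx S0)))
  (l1 : 'M[R]_(cn (toCx S0), cn (toCx S1)))
  (l2 : 'M[R]_(cn (toCx S1), cn (toCx S2)))
  (K0 : 'M[R]_(cn (toCx S1), cn (toCx S0)))
  (K1 : 'M[R]_(cn (toCx S2), cn (toCx S1)))
  (K2 : 'M[R]_(cn (toCx S0), cn (toCx S2))) :
  Scomplex S0 -> Scomplex S1 -> Scomplex S2 ->
  morph (toCx S0) (toCx S2) 0 l0 ->
  morph (toCx S1) (toCx S0) (-1) l1 ->
  morph (toCx S2) (toCx S1) 0 l2 ->
  homog (cdeg (toCx S1)) (cdeg (toCx S0)) 1 K0 ->
  homog (cdeg (toCx S2)) (cdeg (toCx S1)) 0 K1 ->
  homog (cdeg (toCx S0)) (cdeg (toCx S2)) 0 K2 ->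
  cchi (toCx S1) *m K0 + K0 *m cchi (toCx S0) = 0 ->
  cchi (toCx S2) *m K1 + K1 *m cchi (toCx S1) = 0 ->
  cchi (toCx S0) *m K2 + K2 *m cchi (toCx S2) = 0 ->
  cd (toCx S1) *m K0 + K0 *m cd (toCx S0) + l2 *m l0 = 0 ->
  cd (toCx S2) *m K1 + K1 *m cd (toCx S1) + l0 *m l1 = 0 ->
  cd (toCx S0) *m K2 + K2 *m cd (toCx S2) + l1 *m l2 = 0 ->
  htpc_iso (toCx S0) (l1 *m K0 - K2 *m l0) ->
  htpc_iso (toCx S1) (l2 *m K1 - K0 *m l1) ->
  htpc_iso (toCx S2) (l0 *m K2 - K1 *m l2) ->
  [/\ sheq (toCx S0) (shift1 (cone (toCx S2) (toCx S1) 0 l2)),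
      sheq (toCx S1) (cone (toCx S0) (toCx S2) 0 l0) &
      sheq (toCx S2) (cone (toCx S1) (toCx S0) (-1) l1)].
Proof.
move=> G0 G1 G2 m0 m1 m2 h0 h1 h2 c0 c1 c2 d0 d1 d2 i0 i1 i2.
have g0 := good_toCx G0; have g1 := good_toCx G1; have g2 := good_toCx G2.
split.
- apply: (@core2 R (toCx S0) (toCx S2) (toCx S1) 0 0 (-1) l0 l2 l1 K0 K2 K1
    (fun i => match split i with
              | inl a => cdeg (toCx S2) a + 1 + 0
              | inr b => cdeg (toCx S1) b end - 1) 0 (-1))
    => //.
  + by move=> i /=; rewrite split_l; lia.
  + by move=> i /=; rewrite split_r; lia.
- apply: (@core2 R (toCx S1) (toCx S0) (toCx S2) (-1) 0 0 l1 l0 l2 K1 K0 K2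
    (fun i => match split i with
              | inl a => cdeg (toCx S0) a + 1 + 0
              | inr b => cdeg (toCx S2) b end) 1 0)
    => //.
  + by move=> i /=; rewrite split_l; lia.
  + by move=> i /=; rewrite split_r; lia.
- apply: (@core2 R (toCx S2) (toCx S1) (toCx S0) 0 (-1) 0 l2 l1 l0 K2 K1 K0
    (fun i => match split i with
              | inl a => cdeg (toCx S1) a + 1 + (-1)
              | inr b => cdeg (toCx S0) b end) 0 0)
    => //.
  + by move=> i /=; rewrite split_l; lia.
  + by move=> i /=; rewrite split_r; lia.
Qed.
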